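(* For all integers $r,c,K$ there exists an integer $N$ such that the following holds. Let $G$ be a digraph with maximum out-degree at most $c$ and let $S,T\subseteq V(G)$ be such that $|T|\ge N$ and for all $t,t'\in T$ there exist a vertex $s=s(t,t')\in S$, a directed path of length at most $r$ from $s$ to $t$ and a directed path of length at most $r$ from $s$ to $t'$. Then $G$ contains a crown of order $K$ as a depth-$r$ minor.
   Context: The crown of order $K$, $S_K$, is the digraph with vertices $v_1,\dots,v_K$ and $v_{ij}$ ($1\le i<j\le K$) and arcs $(v_{ij},v_i),(v_{ij},v_j)$. Depth-$r$ minors: a digraph $H$ has a directed model in $G$ if there is a map $\delta$ assigning to each $v\in V(H)$ a subgraph $\delta(v)\subseteq G$ and to each arc $e$ of $H$ an arc $\delta(e)$ of $G$ with (1) branch sets pairwise disjoint; (2) if $e=(u,v)$ and $\delta(e)=(u',v')$ then $u'\in\delta(u)$, $v'\in\delta(v)$; (3) for each $v$, with $\mathrm{in}(\delta(v))$ (resp. $\mathrm{out}(\delta(v))$) the vertices of $\delta(v)$ lying on images of arcs entering (resp. leaving) $v$: every in-vertex reaches every out-vertex by a directed path in $\delta(v)$, some vertex of $\delta(v)$ reaches all out-vertices, and some vertex of $\delta(v)$ is reached from all in-vertices. $H$ is a depth-$r$ minor of $G$ if such a model exists in which all paths in the branch sets have length at most $r$. *)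

(* Defs.v *)
From mathcomp Require Import all_boot.
Set Implicit Arguments. Unset Strict Implicit. Unset Printing Implicit Defensive.

(* There is a directed walk of length at most r from x to y using arcs of A.
   (Existence of such a walk is equivalent to existence of a directed path
   of length at most r.) *)
Definition dpath_le (V : finType) (A : rel V) (r : nat) (x y : V) : Prop :=
  exists p : seq V, [&& path A x p, last x p == y & size p <= r].

Definition max_outdeg_le (V : finType) (E : rel V) (c : nat) : Prop :=
  forall x : V, #|[set y | E x y]| <= c.

(* Directed model of H = (VH, EH) in G = (V, E) with depth r.
   delta(v) is the subgraph with vertex set B v and arc set A v;
   the image of an arc (u,w) of H is the arc f u w of G. *)
Definition depth_model (VH : finType) (EH : rel VH) (V : finType) (E : rel V)
    (r : nat) (B : VH -> {set V}) (A : VH -> rel V) (f : VH -> VH -> V * V)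
    : Prop :=
  (forall v x y, A v x y -> [/\ E x y, x \in B v & y \in B v]) /\
  (forall u w, u != w -> [disjoint B u & B w]) /\
  (forall u w, EH u w ->
     [/\ E (f u w).1 (f u w).2, (f u w).1 \in B u & (f u w).2 \in B w]) /\
  (forall v,
     let inv := [set (f u v).2 | u in [set u | EH u v]] in
     let outv := [set (f v w).1 | w in [set w | EH v w]] in
     (forall x y, x \in inv -> y \in outv -> dpath_le (A v) r x y) /\
     (exists2 z, z \in B v & forall y, y \in outv -> dpath_le (A v) r z y) /\
     (exists2 z, z \in B v & forall x, x \in inv -> dpath_le (A v) r x z)).

Definition depth_minor (r : nat) (VH : finType) (EH : rel VH)
    (V : finType) (E : rel V) : Prop :=
  exists (B : VH -> {set V}) (A : VH -> rel V) (f : VH -> VH -> V * V),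
    depth_model EH E r B A f.

(* The crown of order K: vertices v_i (i < K) and v_ij (i < j < K),
   arcs (v_ij, v_i) and (v_ij, v_j). *)
Definition crownV (K : nat) : finType :=
  ('I_K + {p : 'I_K * 'I_K | p.1 < p.2})%type.

Definition crownE (K : nat) : rel (crownV K) :=
  fun a b => match a, b with
             | inr p, inl i => (i == (val p).1) || (i == (val p).2)
             | _, _ => false
             end.

(* Main.v *)
Require Import Defs.
From mathcomp Require Import all_boot zify.
Set Implicit Arguments. Unset Strict Implicit. Unset Printing Implicit Defensive.

Section Select.
Variable V : finType.



Lemma card_set_sum (T : {set V}) (P : pred V) :
  #|[set z in T | P z]| = \sum_(z in T) P z.
Proof.
rewrite -sum1_card (eq_bigl (fun z => (z \in T) && P z)); last by move=> z; rewrite inE.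
by rewrite big_mkcondr /=; apply: eq_bigr => z _; case: (P z).
Qed.

Lemma sum_in_le (T A : {set V}) : \sum_(x in T) (x \in A) <= #|A|.
Proof.
rewrite -card_set_sum; apply: subset_leq_card; apply/subsetP => x; rewrite inE => /andP[].
by [].
Qed.

Lemma avg_exists (T : {set V}) (Q : V -> nat) X :
  0 < #|T| -> \sum_(c in T) Q c <= #|T| * X -> exists2 c, c \in T & Q c <= X.
Proof.
move=> Hn Hs.
have [/existsP[c /andP[H1 H2]]|/existsPn H] := boolP [exists c in T, Q c <= X].
  by exists c.
have : \sum_(c in T) X.+1 <= \sum_(c in T) Q c.
  apply: leq_sum => c Hc; have := H c; rewrite Hc /=; lia.
rewrite sum_nat_const; lia.
Qed.

Lemma markov (T : {set V}) (Q : V -> nat) D :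
  #|[set y in T | D < Q y]| * D.+1 <= \sum_(y in T) Q y.
Proof.
rewrite card_set_sum big_distrl /=.
by apply: leq_sum => y _; case: ltnP => //= H; rewrite mul1n.
Qed.

Lemma card_bigcup_le (I : finType) (P : pred I) (G : I -> {set V}) :
  #|\bigcup_(i | P i) G i| <= \sum_(i | P i) #|G i|.
Proof.
elim/big_rec2: _ => [|i X n _ H]; first by rewrite cards0.
rewrite cardsU; lia.
Qed.

Lemma indep_bounded (R : rel V) (D : nat) (W : {set V}) :
  (forall y z, R y z = R z y) ->
  (forall y, y \in W -> #|[set z in W | R y z]| <= D) ->
  exists2 U : {set V}, U \subset W &
    (#|W| <= D.+1 * #|U|) /\ (forall y z, y \in U -> z \in U -> y != z -> ~~ R y z).
Proof.
move=> Rsym.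
have [n] := ubnP #|W|; elim: n W => // n IH W HW Hdeg.
have [W0|[y Hy]] := set_0Vmem W.
  exists set0; first by rewrite sub0set.
  by rewrite W0 cards0; split=> // ? ?; rewrite inE.
set N := [set z in W | R y z].
set W' := W :\: (y |: N).
have HW' : #|W| <= #|W'| + D.+1.
  have -> : #|W'| = #|W| - #|W :&: (y |: N)| by rewrite cardsD.
  have : #|W :&: (y |: N)| <= #|y |: N|.
    by apply: subset_leq_card; apply: subsetIr.
  rewrite cardsU1 => H1.
  have := Hdeg y Hy; rewrite -/N => H2.
  have : #|W :&: (y |: N)| <= #|W| by apply: subset_leq_card; apply: subsetIl.
  case: (y \notin N) H1; lia.
have sW' : W' \subset W by apply: subsetDl.
have yW' : y \notin W' by rewrite !inE eqxx.
have Hlt : #|W'| < #|W|.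
  apply: proper_card; rewrite properE sW' /=; apply/subsetPn; by exists y.
have Hlt2 : #|W'| < n by lia.
have [U' sU' [HU'1 HU'2]] : exists2 U : {set V}, U \subset W' &
    #|W'| <= D.+1 * #|U| /\ (forall y z, y \in U -> z \in U -> y != z -> ~~ R y z).
  apply: IH => // z Hz; apply: leq_trans (Hdeg z (subsetP sW' z Hz)).
  apply: subset_leq_card; apply/subsetP => x; rewrite !inE.
  by case/andP => /andP[_ ->] ->.
have yU' : y \notin U' by apply: contra yW'; apply: (subsetP sU').
exists (y |: U').
  by rewrite subUset sub1set Hy (subset_trans sU' sW').
split.
  rewrite cardsU1 yU'; lia.
have notN : forall z, z \in U' -> ~~ R y z.
  move=> z /(subsetP sU'); rewrite !inE negb_or => /andP[/andP[_ H] Hz].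
  by move: H; rewrite Hz.
move=> a b; rewrite !inE => /orP[/eqP->|Ha] /orP[/eqP->|Hb]; rewrite ?eqxx //.
- by move=> _; apply: notN.
- by move=> _; rewrite Rsym; apply: notN.
- by apply: HU'2.
Qed.
End Select.

Fixpoint Nsel (m K : nat) : nat :=
  if K is K'.+1 then 2 * ((12 * m).+1 * Nsel m K' + 1) + 2 else 0.

Section Select2.
Variable V : finType.
Variable F : V -> V -> {set V}.
Variable m : nat.
Hypothesis HF : forall a b, #|F a b| <= m.

Definition badc c y z := [|| c \in F y z, c \in F z y, y \in F c z, y \in F z c,
   z \in F c y | z \in F y c].

Lemma badc_sym c y z : badc c y z = badc c z y.
Proof.
rewrite /badc.
by case: (c \in F y z); case: (c \in F z y); case: (y \in F c z); case: (y \in F z c);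
  case: (z \in F c y); case: (z \in F y c).
Qed.

Lemma sum3_inner (T : {set V}) (G : V -> V -> V -> nat) :
  (forall c y, \sum_(z in T) G c y z <= m) ->
  \sum_(c in T) \sum_(y in T) \sum_(z in T) G c y z <= #|T| * (#|T| * m).
Proof.
move=> H; rewrite -sum_nat_const; apply: leq_sum => c _.
by rewrite -sum_nat_const; apply: leq_sum => y _; apply: H.
Qed.

Lemma swap23 (T : {set V}) (G : V -> V -> V -> nat) :
  \sum_(c in T) \sum_(y in T) \sum_(z in T) G c y z =
  \sum_(c in T) \sum_(z in T) \sum_(y in T) G c y z.
Proof. by apply: eq_bigr => c _; rewrite exchange_big. Qed.

Lemma swapc (T : {set V}) (G : V -> V -> V -> nat) :
  \sum_(c in T) \sum_(y in T) \sum_(z in T) G c y z =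
  \sum_(y in T) \sum_(z in T) \sum_(c in T) G c y z.
Proof.
rewrite exchange_big; apply: eq_bigr => y _; by rewrite exchange_big.
Qed.

Lemma sum3D (T : {set V}) (G H : V -> V -> V -> nat) :
  \sum_(c in T) \sum_(y in T) \sum_(z in T) (G c y z + H c y z) =
  \sum_(c in T) \sum_(y in T) \sum_(z in T) G c y z +
  \sum_(c in T) \sum_(y in T) \sum_(z in T) H c y z.
Proof.
rewrite -big_split; apply: eq_bigr => c _; rewrite -big_split.
by apply: eq_bigr => y _; rewrite -big_split.
Qed.

Lemma sum_mem_le (T : {set V}) a b : \sum_(x in T) (x \in F a b) <= m.
Proof. exact: leq_trans (sum_in_le _ _) (HF a b). Qed.

Lemma total_bad (T : {set V}) :
  \sum_(c in T) \sum_(y in T) \sum_(z in T) badc c y z <= #|T| * (6 * m * #|T|).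
Proof.
set n := #|T|.
have step : forall (G : V -> V -> V -> nat),
  \sum_(c in T) \sum_(y in T) \sum_(z in T) G c y z <= n * (n * m) -> True by [].
have E1 : \sum_(c in T) \sum_(y in T) \sum_(z in T) (c \in F y z : nat) <= n * (n * m).
  rewrite swapc; apply: sum3_inner => y z; exact: sum_mem_le.
have E2 : \sum_(c in T) \sum_(y in T) \sum_(z in T) (c \in F z y : nat) <= n * (n * m).
  rewrite swapc; apply: sum3_inner => y z; exact: sum_mem_le.
have E3 : \sum_(c in T) \sum_(y in T) \sum_(z in T) (y \in F c z : nat) <= n * (n * m).
  rewrite swap23; apply: sum3_inner => y z; exact: sum_mem_le.
have E4 : \sum_(c in T) \sum_(y in T) \sum_(z in T) (y \in F z c : nat) <= n * (n * m).
  rewrite swap23; apply: sum3_inner => y z; exact: sum_mem_le.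
have E5 : \sum_(c in T) \sum_(y in T) \sum_(z in T) (z \in F c y : nat) <= n * (n * m).
  apply: sum3_inner => y z; exact: sum_mem_le.
have E6 : \sum_(c in T) \sum_(y in T) \sum_(z in T) (z \in F y c : nat) <= n * (n * m).
  apply: sum3_inner => y z; exact: sum_mem_le.
have Hle : \sum_(c in T) \sum_(y in T) \sum_(z in T) badc c y z <=
  \sum_(c in T) \sum_(y in T) \sum_(z in T) ((c \in F y z : nat) + (c \in F z y : nat)
   + (y \in F c z : nat) + (y \in F z c : nat) + (z \in F c y : nat) + (z \in F y c : nat)).
  apply: leq_sum => c _; apply: leq_sum => y _; apply: leq_sum => z _.
  rewrite /badc.
  by case: (c \in F y z); case: (c \in F z y); case: (y \in F c z); case: (y \in F z c);
    case: (z \in F c y); case: (z \in F y c).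
apply: leq_trans Hle _.
rewrite !sum3D; lia.
Qed.

Lemma select K (T : {set V}) : Nsel m K <= #|T| ->
  exists g : 'I_K -> V, injective g /\ (forall i, g i \in T) /\
    (forall i j k, i != j -> k != i -> k != j -> g k \notin F (g i) (g j)).
Proof.
elim: K T => [|K IH] T HT.
  have g : 'I_0 -> V by case.
  by exists g; split; [case|split; case].
set n := #|T|.
have Hn : 0 < n by move: HT => /=; lia.
have [c cT Hc] := @avg_exists _ T (fun c => \sum_(y in T) \sum_(z in T) badc c y z) _ Hn (total_bad T).
set deg := fun y => \sum_(z in T) badc c y z.
set H := [set y in T | 12 * m < deg y].
have HH : #|H| * (12 * m).+1 <= 6 * m * n.
  exact: leq_trans (markov T deg (12 * m)) Hc.
set W := [set y in T | (y != c) && (deg y <= 12 * m)].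
have HTW : n <= #|W| + #|H| + 1.
  have sub : T \subset W :|: H :|: [set c].
    apply/subsetP => y yT; rewrite !inE yT /=.
    by case: (y =P c) => //= _; case: ltnP.
  apply: leq_trans (subset_leq_card sub) _.
  rewrite cardsU cards1 cardsU; lia.
have Hdeg : forall y, y \in W -> #|[set z in W | badc c y z]| <= 12 * m.
  move=> y yW; apply: leq_trans (_ : _ <= deg y) _.
    rewrite /deg -card_set_sum; apply: subset_leq_card; apply/subsetP => z.
    by rewrite !inE => /andP[/andP[-> _] ->].
  by move: yW; rewrite !inE => /andP[_ /andP[_ ->]].
have [U sUW [HWU HU]] := @indep_bounded V (badc c) (12 * m) W (badc_sym c) Hdeg.
have HU' : Nsel m K <= #|U|.
  move: HT; rewrite /= -/n => HT.
  have h2 : 2 * #|H| <= n by nia.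
  have : (12 * m).+1 * Nsel m K <= (12 * m).+1 * #|U| by lia.
  by rewrite leq_pmul2l.
have [g' [g'inj [g'U g'F]]] := IH U HU'.
have g'W : forall j, g' j \in W by move=> j; apply: (subsetP sUW).
have g'c : forall j, g' j != c by move=> j; have := g'W j; rewrite !inE => /andP[_ /andP[]].
have g'bad : forall a b, a != b -> ~~ badc c (g' a) (g' b).
  move=> a b ab; apply: HU; rewrite ?g'U //.
  by apply: contra ab => /eqP /g'inj ->.
pose g := fun i : 'I_K.+1 => if unlift ord0 i is Some j then g' j else c.
have g0 : g ord0 = c by rewrite /g unlift_none.
have gl : forall j, g (lift ord0 j) = g' j by move=> j; rewrite /g liftK.
exists g; split.
  move=> a b; case: (unliftP ord0 a) => [a' ->|->]; case: (unliftP ord0 b) => [b' ->|->];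
    rewrite ?g0 ?gl //.
  - by move/g'inj ->.
  - by move=> E; move: (g'c a'); rewrite E eqxx.
  - by move=> E; move: (g'c b'); rewrite E eqxx.
split.
  move=> i; case: (unliftP ord0 i) => [i' ->|->]; rewrite ?g0 ?gl //.
  by have := g'W i'; rewrite !inE => /andP[].
have liftne : forall a b : 'I_K, (lift ord0 a != lift ord0 b) = (a != b).
  by move=> a b; rewrite (inj_eq (@lift_inj _ ord0)).
move=> i j k; case: (unliftP ord0 i) => [i' ->|->]; case: (unliftP ord0 j) => [j' ->|->];
  case: (unliftP ord0 k) => [k' ->|->]; rewrite ?g0 ?gl ?liftne ?eqxx //.
- by apply: g'F.
- by move=> ij _ _; apply: contra (g'bad _ _ ij) => Hb; rewrite /badc Hb.
- by move=> _ ki _; apply: contra (g'bad _ _ ki) => Hb; rewrite /badc Hb !orbT.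
- by move=> _ _ kj; apply: contra (g'bad _ _ kj) => Hb; rewrite /badc Hb !orbT.
Qed.
End Select2.

Section Reach.
Variable V : finType.
Variable E : rel V.

Fixpoint reach (k : nat) (x y : V) : bool :=
  if k is k'.+1 then (x == y) || [exists z, E x z && reach k' z y] else x == y.

Lemma reach_refl k x : reach k x x.
Proof. by case: k => [|k] /=; rewrite eqxx. Qed.

Lemma reach_S k x y : reach k x y -> reach k.+1 x y.
Proof.
elim: k x => [|k IH] x /=; first by move=> ->.
case/orP=> [->//|/existsP[z /andP[Exz Hz]]].
by apply/orP; right; apply/existsP; exists z; rewrite Exz /=; exact: IH.
Qed.

Lemma reach_mono k l x y : k <= l -> reach k x y -> reach l x y.
Proof.
move=> kl; rewrite -(subnKC kl); elim: (l - k) => [|n IH]; first by rewrite addn0.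
by move=> H; rewrite addnS; apply: reach_S; apply: IH.
Qed.

Lemma reach_edge k x z y : E x z -> reach k z y -> reach k.+1 x y.
Proof. by move=> Exz Hz /=; apply/orP; right; apply/existsP; exists z; rewrite Exz. Qed.

Lemma reach_trans a b x y z : reach a x y -> reach b y z -> reach (a + b) x z.
Proof.
elim: a x => [|a IH] x; first by rewrite [reach 0 x y]/= => /eqP ->.
rewrite [reach a.+1 x y]/=.
case/orP=> [/eqP -> H|/existsP[w /andP[Exw Hw]] H].
  by apply: reach_mono H; lia.
by apply: reach_edge Exw _; apply: IH.
Qed.

Lemma path_reach x p : path E x p -> reach (size p) x (last x p).
Proof.
elim: p x => [|y p IH] x /=; first by rewrite eqxx.
by case/andP=> Exy Hp; apply: reach_edge Exy _; apply: IH.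
Qed.

Lemma dpath_reach k x y : dpath_le E k x y -> reach k x y.
Proof.
case=> p /and3P[Hp /eqP <- Hs]; exact: reach_mono Hs (path_reach Hp).
Qed.

Fixpoint Mb (c k : nat) : nat := if k is k'.+1 then (c * Mb c k').+1 else 1.

Lemma ball_bound c k x : max_outdeg_le E c -> #|[set y | reach k x y]| <= Mb c k.
Proof.
move=> Hc; elim: k x => [|k IH] x /=.
  have -> : [set y | x == y] = [set x] by apply/setP => y; rewrite !inE eq_sym.
  by rewrite cards1.
have sub : [set y | (x == y) || [exists z, E x z && reach k z y]] \subset
   x |: \bigcup_(z in [set z | E x z]) [set y | reach k z y].
  apply/subsetP => y; rewrite !inE => /orP[/eqP->|/existsP[z /andP[Exz Hz]]].
    by rewrite eqxx.
  apply/orP; right; apply/bigcupP; exists z; by rewrite inE.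
apply: leq_trans (subset_leq_card sub) _.
have H1 : #|\bigcup_(z in [set z | E x z]) [set y | reach k z y]| <= c * Mb c k.
  apply: leq_trans (card_bigcup_le _ _) _.
  apply: leq_trans (_ : \sum_(z in [set z | E x z]) Mb c k <= _).
    by apply: leq_sum => z _; apply: IH.
  by rewrite sum_nat_const; apply: leq_mul => //; apply: Hc.
rewrite cardsU1; case: (_ \notin _) => /=; lia.
Qed.


Section Dist.
Variable L : nat.
Hypothesis L0 : 0 < L.

Definition dist x y := find (fun k => reach k x y) (iota 0 L).

Lemma dist_le x y : dist x y <= L.
Proof. by rewrite /dist; have := find_size (fun k => reach k x y) (iota 0 L); rewrite size_iota. Qed.

Lemma dist_reach x y : dist x y < L -> reach (dist x y) x y.
Proof.
move=> H; have Hh : has (fun k => reach k x y) (iota 0 L) by rewrite has_find size_iota.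
by have := nth_find 0 Hh; rewrite -/(dist x y) nth_iota.
Qed.

Lemma reach_dist k x y : k < L -> reach k x y -> dist x y <= k.
Proof.
move=> kL H; rewrite leqNgt; apply/negP => Hk.
by have := before_find 0 Hk; rewrite nth_iota // H.
Qed.

Lemma dist_leE k x y : k < L -> (dist x y <= k) = reach k x y.
Proof.
move=> kL; apply/idP/idP; last exact: reach_dist.
move=> H; have H' : dist x y < L by lia.
exact: reach_mono H (dist_reach H').
Qed.

Lemma dist_edge x x' y : E x x' -> dist x y <= (dist x' y).+1.
Proof.
move=> Exx'; have H2 := dist_le x y.
case: (ltnP (dist x' y).+1 L) => H3; last by lia.
have H1 : dist x' y < L by lia.
by apply: reach_dist H3 _; apply: reach_edge Exx' (dist_reach H1).
Qed.

Lemma dist_refl x : dist x x = 0.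
Proof. by apply/eqP; rewrite -leqn0; apply: reach_dist => //; apply: reach_refl. Qed.

Lemma dist0 x y : dist x y = 0 -> x = y.
Proof. by move=> H; have := dist_reach (_ : dist x y < L); rewrite H /= => /(_ L0) /eqP. Qed.

Lemma dist_step x y : 0 < dist x y < L ->
  exists x', E x x' && (dist x' y == (dist x y).-1).
Proof.
case/andP=> H0 HL; have := dist_reach HL.
case E1 : (dist x y) H0 => [//|k] _ /=.
case/orP=> [/eqP xy|/existsP[z /andP[Exz Hz]]].
  by move: E1; rewrite xy dist_refl.
exists z; rewrite Exz /=.
have h1 : dist z y <= k by apply: reach_dist Hz; lia.
have h2 := dist_edge y Exz; rewrite E1 in h2.
apply/eqP; lia.
Qed.

Definition next y x :=
  if [pick x' | E x x' && (dist x' y == (dist x y).-1)] is Some x' then x' else x.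

Lemma next_spec x y : 0 < dist x y < L ->
  E x (next y x) /\ dist (next y x) y = (dist x y).-1.
Proof.
move=> H; rewrite /next; case: pickP => [x' /andP[H1 /eqP H2]|H0] //.
by have [x' Hx'] := dist_step H; have := H0 x'; rewrite Hx'.
Qed.

Lemma iter_next s y m : m <= dist s y -> dist s y < L ->
  dist (iter m (next y) s) y = dist s y - m.
Proof.
move=> Hm HL; elim: m Hm => [|m IH] Hm; first by rewrite subn0.
rewrite iterS; have IH' := IH (ltnW Hm).
have Hd : 0 < dist (iter m (next y) s) y < L by rewrite IH'; apply/andP; split; lia.
have [_ ->] := next_spec Hd; rewrite IH'; lia.
Qed.

Lemma iter_edge s y m : m < dist s y -> dist s y < L ->
  E (iter m (next y) s) (iter m.+1 (next y) s).
Proof.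
move=> Hm HL; rewrite iterS; have IH' := iter_next (ltnW Hm) HL.
have Hd : 0 < dist (iter m (next y) s) y < L by rewrite IH'; apply/andP; split; lia.
by have [-> _] := next_spec Hd.
Qed.

Lemma iter_tri s y u m : m <= dist s y -> dist s y < L ->
  dist s u <= m + dist (iter m (next y) s) u.
Proof.
move=> Hm HL; elim: m Hm => [|m IH] Hm //.
have := dist_edge u (iter_edge Hm HL); have := IH (ltnW Hm); lia.
Qed.

End Dist.
End Reach.

Section Construct.
Variables (V : finType) (E : rel V) (r K : nat) (t : 'I_K -> V).

Definition L := (3 * r).+1.
Lemma L0 : 0 < L. Proof. by []. Qed.

Definition D (i : 'I_K) (w : V) := @dist V E L w (t i).
Definition nxt (i : 'I_K) (w : V) := @next V E L (t i) w.

Hypothesis Hsep : forall i k, i != k -> ~~ reach E r (t i) (t k).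

Definition X i := [set w | (D i w <= r) && [forall k, (k != i) ==> (D i w + r.+1 <= D k w)]].

Lemma D_reach k i w : k < L -> D i w <= k -> reach E k w (t i).
Proof.
move=> kL H; have H' : D i w < L by lia.
exact: reach_mono H (dist_reach H').
Qed.

Lemma reach_D k i w : k < L -> reach E k w (t i) -> D i w <= k.
Proof. by move=> kL H; apply: reach_dist kL H. Qed.

Lemma X_le i w : w \in X i -> D i w <= r.
Proof. by rewrite inE => /andP[]. Qed.

Lemma X_gap i k w : w \in X i -> k != i -> D i w + r.+1 <= D k w.
Proof. by rewrite inE => /andP[_ /forallP /(_ k) /implyP H] /H. Qed.

Lemma X_next i w : w \in X i -> 0 < D i w ->
  [/\ E w (nxt i w), nxt i w \in X i & D i (nxt i w) = (D i w).-1].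
Proof.
move=> Hw H0; have Hr := X_le Hw.
have HL : 0 < D i w < L by rewrite H0 /L; lia.
have [He Hd] := next_spec L0 HL.
have Hd' : D i (nxt i w) = (D i w).-1 by [].
split => //; rewrite inE Hd'; apply/andP; split; first lia.
apply/forallP => k; apply/implyP => ki.
have := X_gap Hw ki; have : D k w <= (D k (nxt i w)).+1 by exact: (dist_edge L0 (t k) He).
lia.
Qed.

Lemma tX i : t i \in X i.
Proof.
rewrite inE /D (dist_refl E L0) /=; apply/forallP => k; apply/implyP => ki.
rewrite add0n ltnNge; apply/negP => H.
have rL : r < L by rewrite /L; lia.
have := Hsep (_ : i != k); rewrite eq_sym ki => /(_ isT).
by rewrite (D_reach rL H).
Qed.

Lemma Xdisj i k w : i != k -> w \in X i -> w \in X k -> False.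
Proof.
move=> ik Hi Hk; have := X_gap Hi (_ : k != i); rewrite eq_sym ik => /(_ isT).
have := X_gap Hk ik; lia.
Qed.

Definition AX i x y := (x \in X i) && (0 < D i x) && (y == nxt i x).

Lemma Xwalk i w : w \in X i ->
  exists q, path (AX i) w q && (last w q == t i) && (size q <= D i w).
Proof.
have [n] := ubnP (D i w); elim: n w => // n IH w Hn Hw.
case H0 : (D i w) => [|d].
  exists [::]; rewrite /= andbT; apply/eqP; exact: (dist0 L0 H0).
have Hpos : 0 < D i w by rewrite H0.
have [He Hx Hd] := X_next Hw Hpos.
have [|q /andP[/andP[Hq Hl] Hs]] := IH (nxt i w) _ Hx; first by rewrite Hd; lia.
exists (nxt i w :: q) => /=; rewrite Hq Hl /AX Hw Hpos eqxx /=.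
by rewrite Hd H0 /= in Hs; rewrite ltnS.
Qed.


Definition PP a s' m := iter m (nxt a) s'.
Definition mf a s' := find (fun m => PP a s' m \in X a) (iota 0 r.+1).

Definition Gd a b s' := [/\ a != b, D a s' <= r, D b s' <= r &
   forall k, k != a -> k != b -> 3 * r < D k s'].

Section Seg.
Variables (a b : 'I_K) (s' : V).
Hypothesis G : Gd a b s'.

Lemma G_ab : a != b. Proof. by case: G. Qed.
Lemma G_a : D a s' <= r. Proof. by case: G. Qed.
Lemma G_b : D b s' <= r. Proof. by case: G. Qed.
Lemma G_k k : k != a -> k != b -> 3 * r < D k s'. Proof. by case: G => _ _ _; apply. Qed.

Lemma GaL : D a s' < L. Proof. have := G_a; rewrite /L; lia. Qed.

Lemma PP_D m : m <= D a s' -> D a (PP a s' m) = D a s' - m.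
Proof. move=> Hm; exact: (iter_next L0 Hm GaL). Qed.

Lemma PP_end : PP a s' (D a s') = t a.
Proof. apply: (dist0 L0); have := PP_D (leqnn (D a s')); rewrite subnn; exact. Qed.

Lemma mf_spec : 0 < mf a s' <= D a s' /\ PP a s' (mf a s') \in X a.
Proof.
have Hin : PP a s' (D a s') \in X a by rewrite PP_end tX.
have Hle : mf a s' <= D a s'.
  rewrite leqNgt; apply/negP => Hlt.
  have := before_find 0 Hlt; rewrite nth_iota ?add0n ?Hin // ltnS; exact: G_a.
have Hh : has (fun m => PP a s' m \in X a) (iota 0 r.+1).
  by rewrite has_find size_iota ltnS; apply: leq_trans Hle G_a.
have HX : PP a s' (mf a s') \in X a.
  have := nth_find 0 Hh; rewrite -/(mf a s') nth_iota ?add0n // ltnS; apply: leq_trans Hle G_a.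
split => //; rewrite Hle andbT lt0n; apply/negP => /eqP H0.
move: HX; rewrite H0 /= => HX.
have := X_gap HX (_ : b != a); rewrite eq_sym G_ab => /(_ isT).
have := G_b; lia.
Qed.

Lemma mf_le : mf a s' <= r.
Proof. have [/andP[_ H] _] := mf_spec; have := G_a; lia. Qed.

Lemma seg_before m : m < mf a s' -> PP a s' m \notin X a.
Proof.
move=> Hm; have := before_find 0 Hm; rewrite nth_iota ?add0n => [->//|].
have := mf_le; lia.
Qed.

Lemma seg_edge m : m < mf a s' -> E (PP a s' m) (PP a s' m.+1).
Proof.
move=> Hm; have [/andP[_ H] _] := mf_spec.
have Hm' : m < D a s' by apply: leq_trans Hm H.
exact: (iter_edge L0 Hm' GaL).
Qed.

Lemma seg_props m : m < mf a s' ->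
  [/\ (forall l, PP a s' m \notin X l), D a (PP a s' m) <= 2 * r,
     D b (PP a s' m) <= 2 * r &
     (forall k, k != a -> k != b -> 2 * r < D k (PP a s' m))].
Proof.
move=> Hm; have [/andP[H0 Hle] _] := mf_spec.
have HmD : m <= D a s' by apply: leq_trans (ltnW Hm) Hle.
have HDa : D a (PP a s' m) = D a s' - m := PP_D HmD.
have Ga := G_a; have Mr := mf_le.
have HDa' : D a (PP a s' m) <= r by rewrite HDa; lia.
have Hk : forall k, k != a -> k != b -> 2 * r < D k (PP a s' m).
  move=> k ka kb; have := G_k ka kb.
  have : D k s' <= m + D k (PP a s' m) by exact: (iter_tri L0 (t k) HmD GaL).
  lia.
have notX := seg_before Hm.
split => //.
- move=> l; case: (eqVneq l a) => [->//|la]; apply/negP => Hl.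
  have := X_gap Hl (_ : a != l); rewrite eq_sym la => /(_ isT); lia.
- lia.
- move: notX; rewrite inE HDa' /= => /forallPn[k]; rewrite negb_imply -ltnNge.
  case/andP=> ka Hlt; case: (eqVneq k b) => [kb|kb].
    by rewrite -kb; lia.
  have := Hk k ka kb; lia.
Qed.

Definition Aseg x y := [exists m : 'I_r.+1,
   (m.+1 < mf a s') && (x == PP a s' m) && (y == PP a s' m.+1)].

Lemma seg_walk m : m < mf a s' ->
  exists q, path Aseg s' q && (last s' q == PP a s' m) && (size q <= m).
Proof.
elim: m => [|m IH] Hm; first by exists nil; rewrite /= eqxx.
have [q /andP[/andP[Hq /eqP Hl] Hs]] := IH (ltnW Hm).
exists (rcons q (PP a s' m.+1)); rewrite rcons_path last_rcons size_rcons Hq Hl eqxx.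
rewrite andTb andbT ltnS Hs andbT; apply/existsP.
have Mr := mf_le.
have mr : m < r.+1 by lia.
by exists (Ordinal mr); rewrite Hm !eqxx.
Qed.
End Seg.

Definition Cseg a s' := [set w | [exists m : 'I_r.+1, (m < mf a s') && (w == PP a s' m)]].
Definition exitp a s' := (PP a s' (mf a s').-1, PP a s' (mf a s')).

Lemma Cseg_props a b s' (G : Gd a b s') w : w \in Cseg a s' ->
  [/\ (forall l, w \notin X l), D a w <= 2 * r, D b w <= 2 * r &
     (forall k, k != a -> k != b -> 2 * r < D k w)].
Proof. by rewrite inE => /existsP[m /andP[Hm /eqP ->]]; apply: seg_props. Qed.

Lemma Aseg_ok a b s' (G : Gd a b s') x y : Aseg a s' x y ->
  [/\ E x y, x \in Cseg a s' & y \in Cseg a s'].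
Proof.
case/existsP=> m /andP[/andP[Hm /eqP ->] /eqP ->].
have Mr := mf_le G.
split.
- by apply: (seg_edge G); apply: ltnW.
- by rewrite inE; apply/existsP; exists m; rewrite eqxx andbT; apply: ltnW.
- have mr : m.+1 < r.+1 by lia.
  by rewrite inE; apply/existsP; exists (Ordinal mr); rewrite eqxx andbT.
Qed.

Lemma exit_ok a b s' (G : Gd a b s') :
  [/\ E (exitp a s').1 (exitp a s').2, (exitp a s').1 \in Cseg a s' &
      (exitp a s').2 \in X a].
Proof.
have [/andP[H0 _] HX] := mf_spec G; have Mr := mf_le G.
have H1 : (mf a s').-1 < mf a s' by lia.
split => //=.
- by have := seg_edge G H1; rewrite prednK.
- have mr : (mf a s').-1 < r.+1 by lia.
  by rewrite inE; apply/existsP; exists (Ordinal mr); rewrite eqxx andbT.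
Qed.

Lemma Cseg_walk a b s' (G : Gd a b s') y : y \in Cseg a s' ->
  exists q, path (Aseg a s') s' q && (last s' q == y) && (size q <= r).
Proof.
rewrite inE => /existsP[m /andP[Hm /eqP ->]].
have [q /andP[/andP[H1 H2] H3]] := seg_walk G Hm.
exists q; rewrite H1 H2 /=; apply: leq_trans H3 _; exact: leq_trans (ltnW Hm) (mf_le G).
Qed.

Lemma s_Cseg a b s' (G : Gd a b s') : s' \in Cseg a s'.
Proof.
have [/andP[H0 _] _] := mf_spec G.
by rewrite inE; apply/existsP; exists ord0; rewrite H0 eqxx.
Qed.

Section Crown.
Variables (src : 'I_K -> 'I_K -> V) (x0 : V).
Hypothesis HG1 : forall i j : 'I_K, i < j -> Gd i j (src i j).
Hypothesis HG2 : forall i j : 'I_K, i < j -> Gd j i (src i j).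

Definition pT := {p : 'I_K * 'I_K | p.1 < p.2}.
Definition pa (p : pT) := (val p).1.
Definition pb (p : pT) := (val p).2.
Definition sp (p : pT) := src (pa p) (pb p).
Lemma Gpa p : Gd (pa p) (pb p) (sp p). Proof. exact: HG1 (valP p). Qed.
Lemma Gpb p : Gd (pb p) (pa p) (sp p). Proof. exact: HG2 (valP p). Qed.

Definition Bm (v : crownV K) : {set V} :=
  match v with inl i => X i | inr p => Cseg (pa p) (sp p) :|: Cseg (pb p) (sp p) end.
Definition Am (v : crownV K) : rel V :=
  match v with inl i => AX i
  | inr p => fun x y => Aseg (pa p) (sp p) x y || Aseg (pb p) (sp p) x y end.
Definition fm (u w : crownV K) : V * V :=
  match u, w with
  | inr p, inl k => if k == pa p then exitp (pa p) (sp p) else exitp (pb p) (sp p)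
  | _, _ => (x0, x0) end.

Lemma B_props p w : w \in Bm (inr p) ->
  [/\ (forall l, w \notin X l), D (pa p) w <= 2 * r, D (pb p) w <= 2 * r &
     (forall k, k != pa p -> k != pb p -> 2 * r < D k w)].
Proof.
rewrite /= in_setU => /orP[H|H].
  by have := Cseg_props (Gpa p) H.
have [H1 H2 H3 H4] := Cseg_props (Gpb p) H; split => // k ka kb; exact: H4.
Qed.

Lemma sub_ok : forall v x y, Am v x y -> [/\ E x y, x \in Bm v & y \in Bm v].
Proof.
  case=> [i|p] x y /=.
    case/andP=> [/andP[Hx H0] /eqP ->]; have [He Hn _] := X_next Hx H0; by [].
  case/orP=> H.
    by have [He H1 H2] := Aseg_ok (Gpa p) H; split => //; rewrite in_setU ?H1 ?H2.
  by have [He H1 H2] := Aseg_ok (Gpb p) H; split => //; rewrite in_setU ?H1 ?H2 !orbT.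
Qed.

Lemma arcs_ok : forall u w, crownE u w ->
     [/\ E (fm u w).1 (fm u w).2, (fm u w).1 \in Bm u & (fm u w).2 \in Bm w].
Proof.
  case=> [i|p] [k|p'] //= Hk.
  case: ifP => [/eqP ->|kpa].
    by have [H1 H2 H3] := exit_ok (Gpa p); split => //; apply/setUP; left.
  have kpb : k = pb p by move: Hk; rewrite kpa /= => /eqP.
  by rewrite kpb; have [H1 H2 H3] := exit_ok (Gpb p); split => //; apply/setUP; right.
Qed.

Lemma disjP' (A B : {set V}) : (forall x, x \in A -> x \in B -> False) -> [disjoint A & B].
Proof.
move=> H; rewrite -setI_eq0; apply/eqP/setP => x; rewrite in_setI in_set0.
by apply/negP => /andP[H1 H2]; apply: (H x).
Qed.

Lemma disj_ok : forall u w, u != w -> [disjoint Bm u & Bm w].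
Proof.
case=> [i|p] [k|p'] Huw; apply: disjP' => x Hx Hy.
- by apply: (Xdisj (_ : i != k) Hx Hy).
- by have [H _ _ _] := B_props Hy; move: (H i); rewrite Hx.
- by have [H _ _ _] := B_props Hx; move: (H k); rewrite Hy.
have [_ Ha Hb Hk] := B_props Hx.
have [_ Ha' Hb' Hk'] := B_props Hy.
have h1 : (pa p' == pa p) || (pa p' == pb p).
  case: (eqVneq (pa p') (pa p)) => //= e1; case: (eqVneq (pa p') (pb p)) => //= e2.
  by have := Hk _ e1 e2; rewrite ltnNge Ha'.
have h2 : (pb p' == pa p) || (pb p' == pb p).
  case: (eqVneq (pb p') (pa p)) => //= e1; case: (eqVneq (pb p') (pb p)) => //= e2.
  by have := Hk _ e1 e2; rewrite ltnNge Hb'.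
have l1 : pa p < pb p := valP p.
have l2 : pa p' < pb p' := valP p'.
move: Huw => /=; case/orP: h1 => /eqP e1; case/orP: h2 => /eqP e2.
- by move: l2; rewrite e1 e2 ltnn.
- suff -> : p = p' by rewrite eqxx.
  apply: val_inj; rewrite (surjective_pairing (val p)) (surjective_pairing (val p')).
  by rewrite -/(pa p) -/(pb p) -/(pa p') -/(pb p') e1 e2.
- by move: l2; rewrite e1 e2 ltnNge (ltnW l1).
- by move: l2; rewrite e1 e2 ltnn.
Qed.

Lemma model : depth_model (@crownE K) E r Bm Am fm.
Proof.
split; first exact: sub_ok.
split; first exact: disj_ok.
split; first exact: arcs_ok.
case=> [k|p].
- split.
    by move=> x y _ /imsetP[w]; rewrite inE; case: w.
  split.
    exists (t k); first exact: tX.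
    by move=> y /imsetP[w]; rewrite inE; case: w.
  exists (t k); first exact: tX.
  move=> x /imsetP[u]; rewrite inE => Hu ->.
  have [_ _ H] := arcs_ok Hu.
  have [q /andP[/andP[H1 H2] H3]] := Xwalk H.
  exists q; apply/and3P; split => //; exact: leq_trans H3 (X_le H).
- split.
    by move=> x y /imsetP[u]; rewrite inE; case: u.
  split; last first.
    exists (sp p); first by apply/setUP; left; exact: s_Cseg (Gpa p).
    by move=> x /imsetP[u]; rewrite inE; case: u.
  exists (sp p); first by apply/setUP; left; exact: s_Cseg (Gpa p).
  move=> y /imsetP[w]; rewrite inE => Hw ->.
  have [_ H _] := arcs_ok Hw.
  case/setUP: H => H.
    have [q /andP[/andP[H1 H2] H3]] := Cseg_walk (Gpa p) H.
    exists q; apply/and3P; split => //.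
    by apply: sub_path H1 => a b Hab /=; rewrite Hab.
  have [q /andP[/andP[H1 H2] H3]] := Cseg_walk (Gpb p) H.
  exists q; apply/and3P; split => //.
  by apply: sub_path H1 => a b Hab /=; rewrite Hab orbT.
Qed.
End Crown.

End Construct.

Theorem mainTheorem16 :
  forall r c K : nat, exists N : nat,
    forall (V : finType) (E : rel V), max_outdeg_le E c ->
    forall S T : {set V}, N <= #|T| ->
    (forall t t', t \in T -> t' \in T ->
       exists2 s, s \in S & dpath_le E r s t /\ dpath_le E r s t') ->
    depth_minor r (@crownE K) E.
Proof.
move=> r c K; exists (Nsel (Mb c (3 * r)) K.+1).
move=> V E Hc S T HN H.
have [x0 _] : exists x0, x0 \in T.
  apply/set0Pn; rewrite -card_gt0; apply: leq_trans HN; rewrite /=; lia.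
pose s a b := odflt x0 [pick z | reach E r z a && reach E r z b].
have Hs : forall a b, a \in T -> b \in T -> reach E r (s a b) a && reach E r (s a b) b.
  move=> a b Ha Hb; rewrite /s; case: pickP => [z //|H0].
  have [z _ [H1 H2]] := H a b Ha Hb.
  by have := H0 z; rewrite (dpath_reach H1) (dpath_reach H2).
pose F a b := [set x | reach E (3 * r) (s a b) x].
have HF : forall a b, #|F a b| <= Mb c (3 * r) by move=> a b; apply: ball_bound.
have [g [ginj [gT gF]]] := @select V F _ HF K.+1 T HN.
pose t (i : 'I_K) := g (widen_ord (leqnSn K) i).
have wne : forall i : 'I_K, widen_ord (leqnSn K) i != ord_max.
  move=> i; apply/eqP => /(congr1 val) /= e; have := ltn_ord i; rewrite e ltnn.
  by [].
have wneq : forall i k : 'I_K, (widen_ord (leqnSn K) i != widen_ord (leqnSn K) k) = (i != k).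
  move=> i k; apply/idP/idP; apply: contra => /eqP e; apply/eqP.
    by rewrite e.
  by apply: val_inj; move/(congr1 val): e.
have Hsep : forall i k, i != k -> ~~ reach E r (t i) (t k).
  move=> i k ik; apply/negP => Hr.
  have := Hs (t i) (g ord_max) (gT _) (gT _); case/andP => H1 _.
  have H3 : reach E (3 * r) (s (t i) (g ord_max)) (t k).
    apply: reach_mono (reach_trans H1 Hr); lia.
  have := gF (widen_ord (leqnSn K) i) ord_max (widen_ord (leqnSn K) k) (wne i).
  rewrite wneq eq_sym ik (wne k) => /(_ isT isT).
  by rewrite inE H3.
pose src (i j : 'I_K) := s (t i) (t j).
have rL : r < L r by rewrite /L; lia.
have rL3 : 3 * r < L r by rewrite /L; lia.
have Gen : forall a b : 'I_K, a != b -> forall z, reach E r z (t a) -> reach E r z (t b) ->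
   (forall k, k != a -> k != b -> ~~ reach E (3 * r) z (t k)) -> Gd E r t a b z.
  move=> a b ab z Ha Hb Hk; split => //.
  - exact: reach_D rL Ha.
  - exact: reach_D rL Hb.
  move=> k ka kb; rewrite ltnNge; apply/negP => Hle.
  by have := Hk k ka kb; rewrite (D_reach rL3 Hle).
have Hsrc : forall i j : 'I_K, i < j -> [/\ i != j,
    reach E r (src i j) (t i), reach E r (src i j) (t j) &
    forall k, k != i -> k != j -> ~~ reach E (3 * r) (src i j) (t k)].
  move=> i j ij; have ij' : i != j by rewrite neq_ltn ij.
  have /andP[H1 H2] := Hs (t i) (t j) (gT _) (gT _).
  split => // k ki kj.
  have := gF (widen_ord (leqnSn K) i) (widen_ord (leqnSn K) j) (widen_ord (leqnSn K) k).
  by rewrite !wneq ij' ki kj => /(_ isT isT isT); rewrite inE.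
have HG1 : forall i j : 'I_K, i < j -> Gd E r t i j (src i j).
  by move=> i j ij; have [a b d e] := Hsrc i j ij; apply: Gen.
have HG2 : forall i j : 'I_K, i < j -> Gd E r t j i (src i j).
  move=> i j ij; have [a b d e] := Hsrc i j ij; apply: Gen => //.
    by rewrite eq_sym.
  by move=> k k1 k2; apply: e.
exists (Bm E r t src), (Am E r t src), (fm E r t src x0).
exact: (model Hsep x0 HG1 HG2).
Qed.
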